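(* Let $m$ be an even positive integer with prime factorization $m=\prod_{i=1}^{k}p_i^{b_i}$, and let $l(m)=\prod_{i=1}^{k}p_i^{\lfloor \log_{p_i} m\rfloor + b_i}$. Then for every integer $k'$, $$\binom{m+k'}{m}\equiv \binom{l(m)-1-k'}{m}\pmod{m}.$$
   Context: For any integer $a$ (possibly negative) and positive integer $m$, the binomial symbol is defined by $\binom{a}{m}=\frac{\prod_{i=0}^{m-1}(a-i)}{m!}$, which is an integer. $\lfloor x\rfloor$ denotes the greatest integer not exceeding $x$. *)

(* Defs.v *)
From HB Require Import structures.
From mathcomp Require Import all_boot all_order all_algebra.
Import Order.TTheory GRing.Theory Num.Theory.
Local Open Scope ring_scope.

Definition intbinom (a : int) (m : nat) : int :=
  ((\prod_(i < m) (a - (i : nat)%:Z)) %/ (m`!)%:Z)%Z.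

Definition lfun (m : nat) : nat :=
  (\prod_(p <- primes m) p ^ (trunc_log p m + logn p m))%N.

(* Main.v *)
Require Import Defs.
From HB Require Import structures.
From mathcomp Require Import all_boot all_order all_algebra zify ring lra.
Import Order.TTheory GRing.Theory Num.Theory.


Lemma logn_prod_primes (s : seq nat) (f : nat -> nat) p :
  uniq s -> all prime s ->
  logn p (\prod_(q <- s) q ^ f q) = if p \in s then f p else 0.
Proof.
elim: s => [|q s IH] /=; first by rewrite big_nil logn1.
case/andP=> qs us /andP[pq ps].
rewrite big_cons lognM; last 2 first.
- by rewrite expn_gt0 prime_gt0.
- rewrite big_seq; apply: (big_ind (fun x => 0 < x)) => // [x y ? ?|i i_s].
  + by rewrite muln_gt0; apply/andP.
  + by rewrite expn_gt0 prime_gt0 //; apply: (allP ps).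
rewrite lognX logn_prime // IH // in_cons.
case: eqVneq => [->|_]; last by rewrite muln0.
by rewrite (negbTE qs) muln1 addn0.
Qed.

Lemma lfun_gt0 m : 0 < lfun m.
Proof.
rewrite /lfun big_seq; apply: (big_ind (fun x => 0 < x)) => // [x y ? ?|i].
  by rewrite muln_gt0; apply/andP.
by rewrite mem_primes => /andP[pi _]; rewrite expn_gt0 prime_gt0.
Qed.

Lemma logn_lfun m p : logn p (lfun m) =
  if p \in primes m then trunc_log p m + logn p m else 0.
Proof.
rewrite /lfun logn_prod_primes ?primes_uniq //.
by apply/allP => q; rewrite mem_primes => /andP[].
Qed.

Lemma mg_dvd m j : 0 < m -> 0 < j -> j <= m ->
  m * gcdn j (lfun m) %| lfun m.
Proof.
move=> m0 j0 jm; set L := lfun m; set g := gcdn j L.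
have L0 : 0 < L by apply: lfun_gt0.
have g0 : 0 < g by rewrite gcdn_gt0 j0.
have gj : g %| j by apply: dvdn_gcdl.
have gL : g %| L by apply: dvdn_gcdr.
apply/dvdn_partP; first by rewrite muln_gt0 m0.
move=> p; rewrite mem_primes => /and3P[pp _ pmg].
have pm : p \in primes m.
  rewrite mem_primes pp m0 /=.
  move: pmg; rewrite Euclid_dvdM // => /orP[//|pg].
  have pL : p %| L by apply: dvdn_trans pg gL.
  have : p \in primes L by rewrite mem_primes pp L0.
  rewrite -logn_gt0 /L logn_lfun.
  by case: ifP => //; rewrite mem_primes => /and3P[].
rewrite p_part pfactor_dvdn // /L logn_lfun pm lognM // addnC leq_add2r.
apply: leq_trans (dvdn_leq_log _ _ _) _; [exact: j0| exact: gj|].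
apply: trunc_log_max; first exact: prime_gt1.
apply: leq_trans jm; apply: dvdn_leq => //; exact: pfactor_dvdnn.
Qed.

Lemma m_dvd_bin m j : 0 < m -> 0 < j -> j <= m -> m %| 'C(lfun m, j).
Proof.
move=> m0 j0 jm; set L := lfun m.
have L0 : 0 < L by apply: lfun_gt0.
have g0 : 0 < gcdn j L by rewrite gcdn_gt0 j0.
have H1 : L %| j * 'C(L, j).
  case: j j0 jm {g0} => // j' _ _; rewrite -mul_bin_diag; exact: dvdn_mulr.
have H2 : L %| gcdn j L * 'C(L, j).
  rewrite muln_gcdl dvdn_gcd H1 /=; exact: dvdn_mulr.
have := dvdn_trans (@mg_dvd m j m0 j0 jm) H2.
by rewrite mulnC dvdn_pmul2l.
Qed.

Lemma nat_period m N : 0 < m -> 'C(N + lfun m, m) = 'C(N, m) %[mod m].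
Proof.
move=> m0; rewrite addnC -binomial.Vandermonde big_ord_recl /= bin0 mul1n subn0.
rewrite -modnDm.
have -> : (\sum_(i < m) 'C(lfun m, bump 0 i) * 'C(N, m - bump 0 i)) %% m = 0.
  apply/eqP; rewrite -/(dvdn _ _); apply: dvdn_sum => i _.
  apply: dvdn_mulr; apply: m_dvd_bin => //; exact: ltn_ord.
by rewrite addn0 modn_mod.
Qed.

Local Open Scope ring_scope.

Lemma prod_cong m (T : int) (F G : 'I_m -> int) :
  (forall i, (T %| F i - G i)%Z) -> (T %| \prod_(i < m) F i - \prod_(i < m) G i)%Z.
Proof.
move=> H; apply: (big_rec2 (fun x y => (T %| x - y)%Z)); first by rewrite subrr dvdz0.
move=> i x y _ Hxy.
have -> : F i * x - G i * y = (F i - G i) * x + G i * (x - y) by ring.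
by apply: rpredD; [apply: dvdz_mulr | apply: dvdz_mull].
Qed.

Lemma P_shift m (T a : int) :
  (T %| \prod_(i < m) (a + T - (i : nat)%:Z) - \prod_(i < m) (a - (i : nat)%:Z))%Z.
Proof.
apply: prod_cong => i; have -> : a + T - (i : nat)%:Z - (a - (i : nat)%:Z) = T by ring.
exact: dvdzz.
Qed.

Lemma P_nat m (N : nat) : (m <= N)%N ->
  \prod_(i < m) (N%:Z - (i : nat)%:Z) = (N ^_ m)%:Z.
Proof.
move=> mN; rewrite ffact_prod.
elim/big_rec2: _ => // i x y _ ->.
by rewrite PoszM subzn // (leq_trans _ mN) // ltnW.
Qed.

Lemma key m (a : int) (c : nat) : (0 < m)%N ->
  m%:Z <= a + (c * (m * m`! * lfun m))%N%:Z ->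
  (intbinom a m = ('C(absz (a + (c * (m * m`! * lfun m))%N%:Z), m))%:Z %[mod m%:Z])%Z.
Proof.
move=> m0; set S := (c * _)%N; move=> hm.
set N := absz (a + S%:Z).
have hN : a + S%:Z = N%:Z by rewrite /N gez0_abs //; lia.
have mN : (m <= N)%N by rewrite -lez_nat -hN.
have hP : \prod_(i < m) (a + S%:Z - (i : nat)%:Z) = ('C(N, m) * m`!)%N%:Z.
  by rewrite hN P_nat // bin_ffact.
have hT := P_shift m S%:Z a; rewrite hP in hT.
have hK : ((m * m`!)%N%:Z %| S%:Z)%Z.
  by rewrite dvdzE /= /S; apply: dvdn_mull; apply: dvdn_mulr.
have h1 := dvdz_trans hK hT.
set Pa := \prod_(i < m) _ in h1.
have f0 : (m`!)%:Z != 0 by rewrite eqz_nat -lt0n fact_gt0.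
have hf : ((m`!)%:Z %| Pa)%Z.
  have h2 : ((m`!)%:Z %| ('C(N, m) * m`!)%N%:Z - Pa)%Z.
    by apply: dvdz_trans h1; rewrite dvdzE /= dvdn_mull.
  have h3 : ((m`!)%:Z %| ('C(N, m) * m`!)%N%:Z)%Z by rewrite dvdzE /= dvdn_mull.
  have -> : Pa = ('C(N, m) * m`!)%N%:Z - (('C(N, m) * m`!)%N%:Z - Pa) by ring.
  exact: rpredB.
rewrite /intbinom -/Pa.
have ePa := divzK hf.
apply/eqP; rewrite eqz_mod_dvd.
rewrite -(@dvdz_mul2r (m`!%:Z) _ _ f0) mulrBl ePa.
by rewrite !PoszM in h1; rewrite -opprB rpredN.
Qed.

Lemma int_period m (a : int) : (0 < m)%N ->
  (intbinom (a + (lfun m)%:Z) m = intbinom a m %[mod m%:Z])%Z.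
Proof.
move=> m0; set K := (m * m`! * lfun m)%N.
have K1 : (m <= K)%N.
  rewrite /K -mulnA; apply: leq_pmulr; rewrite muln_gt0 fact_gt0; exact: lfun_gt0.
have L0 := lfun_gt0 m.
set c := (absz a).+1.
have hc : m%:Z <= a + (c * K)%N%:Z.
  rewrite PoszM /c; have : m%:Z <= K%:Z by rewrite lez_nat.
  nia.
have hc' : m%:Z <= a + (lfun m)%:Z + (c * K)%N%:Z.
  by apply: le_trans hc _; rewrite lerD2r lerDl.
rewrite (@key m _ c m0 hc') (@key m _ c m0 hc).
have -> : absz (a + (lfun m)%:Z + (c * K)%N%:Z) = addn (absz (a + (c * K)%N%:Z)) (lfun m).
  apply/eqP; rewrite -eqz_nat PoszD !gez0_abs; first by rewrite addrAC.
  - by apply: le_trans hc.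
  - by apply: le_trans hc'.
rewrite !modz_nat; congr Posz.
exact: nat_period.
Qed.

Lemma reflect_binom m (k : int) : ~~ odd m ->
  intbinom (-1 - k) m = intbinom (m%:Z + k) m.
Proof.
move=> hodd; rewrite /intbinom; congr (_ %/ _)%Z.
rewrite [RHS](reindex_inj rev_ord_inj) /=.
transitivity (\prod_(i < m) - (k + 1 + (i : nat)%:Z)).
  by apply: eq_bigr => i _; rewrite !opprD; ring.
rewrite prodrN card_ord -signr_odd (negbTE hodd) expr0 mul1r.
apply: eq_bigr => i _; rewrite -subzn ?ltn_ord // -addn1 PoszD; ring.
Qed.

Theorem lemma2p2 (m : nat) (k' : int) :
  (0 < m)%N -> ~~ odd m ->
  (intbinom (m%:Z + k') m = intbinom ((lfun m)%:Z - 1 - k') m %[mod m%:Z])%Z.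
Proof.
move=> m0 hodd; rewrite -reflect_binom //.
have -> : (lfun m)%:Z - 1 - k' = -1 - k' + (lfun m)%:Z by ring.
by rewrite int_period.
Qed.
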